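(* For every $n\ge1$, $\mathsf{COH}$ admits $n$-fairness preservation. That is, for all $A_0,A_1\subseteq 2^{<\omega}$, every set $C$ that is $n$-fair for $A_0,A_1$, and every uniformly $C$-computable sequence of sets $R_0,R_1,\dots$, there is an $\vec R$-cohesive set $G$ such that $G\oplus C$ is $n$-fair for $A_0,A_1$.
   Context: An infinite set $G$ is $\vec R$-cohesive for a sequence $R_0,R_1,\dots$ if for each $i$, either $G\subseteq^* R_i$ or $G\subseteq^*\overline{R_i}$, where $\subseteq^*$ means inclusion up to finitely many elements. $\mathsf{COH}$ is the statement that every uniform sequence of sets has a cohesive set. Strings are finite binary strings, and $\preceq$ is the prefix relation. Two strings are incomparable if neither is a prefix of the other. Matrices. An $m$-by-$n$ matrix $M$ is an array of strings $\sigma_{i,j}$ ($i<m$, $j<n$), with rows $M(i)=(\sigma_{i,0},\dots,\sigma_{i,n-1})$. It is disjoint if each row consists of pairwise incomparable strings. Formulas. An $m$-by-$n$ formula is a formula with distinguished finite-set variables $U_{i,j}$. It is $\Sigma^{0,X}_1$ if it is $\Sigma^0_1$ relative to $X$. Valuations. An $M$-valuation is a tuple $V=(B_{i,j})$ of finite sets $B_{i,j}\subseteq\{\tau:\tau\succeq\sigma_{i,j}\}$. We write $\varphi(V)$ for $\varphi$ evaluated at $U_{i,j}:=B_{i,j}$, and $V(i)=(B_{i,0},\dots,B_{i,n-1})$. We write $V>s$ if all strings occurring in $V$ have length $>s$. Essential. $\varphi$ is essential in $M$ if for every $s$ there is an $M$-valuation $V>s$ with $\varphi(V)$. Diagonalization.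 An $M$-valuation $V$ diagonalizes against $A_0,A_1$ if for every $i<m$ there are components $L,R$ of $V(i)$ with $L\subseteq A_0$ and $R\subseteq A_1$. Fairness. For $n\ge1$, a set $X$ is $n$-fair for $A_0,A_1$ if the following holds: for every $m$, every $\Sigma^{0,X}_1$ $m$-by-$2^nm$ formula $\varphi$, and every $m$-by-$2^nm$ disjoint matrix $M$ in which $\varphi$ is essential, there is an $M$-valuation $V$ diagonalizing against $A_0,A_1$ with $\varphi(V)$. *)

(* Defs.v *)
From mathcomp Require Import all_boot.
Set Implicit Arguments.
Unset Strict Implicit.
Unset Printing Implicit Defensive.

Inductive prog : Type :=
| PZero
| PSucc                              (* (head of args).+1 *)
| PProj (i : nat)                    (* i-th argument (0 if absent) *)
| POracle (i : nat)                  (* X (i-th argument), as 0/1 *)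
| PComp (f : prog) (gs : seq prog)
| PRec (f g : prog)                  (* primitive recursion on first argument *)
| PMu (f : prog).                    (* least y with f (y :: args) = 0 *)

Inductive eval (X : nat -> bool) : prog -> seq nat -> nat -> Prop :=
| eZero args : eval X PZero args 0
| eSucc args : eval X PSucc args (nth 0 args 0).+1
| eProj i args : eval X (PProj i) args (nth 0 args i)
| eOracle i args : eval X (POracle i) args (nat_of_bool (X (nth 0 args i)))
| eComp f gs args ys y :
    evalList X gs args ys -> eval X f ys y -> eval X (PComp f gs) args y
| eRec0 f g rest y : eval X f rest y -> eval X (PRec f g) (0 :: rest) y
| eRecS f g k rest z y :
    eval X (PRec f g) (k :: rest) z -> eval X g (k :: z :: rest) y ->
    eval X (PRec f g) (k.+1 :: rest) y
| eMu f args y :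
    eval X f (y :: args) 0 ->
    (forall k, k < y -> exists z, eval X f (k :: args) z.+1) ->
    eval X (PMu f) args y
with evalList (X : nat -> bool) : seq prog -> seq nat -> seq nat -> Prop :=
| eNil args : evalList X [::] args [::]
| eCons g gs args y ys :
    eval X g args y -> evalList X gs args ys -> evalList X (g :: gs) args (y :: ys).

Definition halts (X : nat -> bool) (p : prog) (args : seq nat) : Prop :=
  exists y, eval X p args y.

Definition sigma1 (X : nat -> bool) (P : nat -> Prop) : Prop :=
  exists p, forall x, P x <-> halts X p [:: x].

Definition unif_computable (X : nat -> bool) (R : nat -> nat -> bool) : Prop :=
  exists p, forall i x, eval X p [:: i; x] (nat_of_bool (R i x)).

Definition join (G C : nat -> bool) : nat -> bool :=
  fun k => if odd k then C k./2 else G k./2.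

Definition infinite_set (G : nat -> bool) : Prop :=
  forall k, exists x, k <= x /\ G x.

Definition cohesive (R : nat -> nat -> bool) (G : nat -> bool) : Prop :=
  infinite_set G /\
  forall i, (exists k, forall x, k <= x -> G x -> R i x) \/
            (exists k, forall x, k <= x -> G x -> ~~ R i x).

(* strings are bitseq; sigma ⪯ tau is [prefix sigma tau] *)
Definition incomparable (s t : bitseq) : bool := ~~ prefix s t && ~~ prefix t s.

Definition matrix_s (m N : nat) := 'I_m -> 'I_N -> bitseq.
(* a tuple of finite sets of strings (finite sets represented by lists) *)
Definition valuation (m N : nat) := 'I_m -> 'I_N -> seq bitseq.

Definition disjoint_matrix m N (M : matrix_s m N) : Prop :=
  forall i (j j' : 'I_N), j != j' -> incomparable (M i j) (M i j').

Definition is_Mval m N (M : matrix_s m N) (V : valuation m N) : Prop :=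
  forall i j, all (fun tau => prefix (M i j) tau) (V i j).

Definition val_gt m N (s : nat) (V : valuation m N) : Prop :=
  forall i j, all (fun tau => s < size tau) (V i j).

(* canonical code of a finite set of strings (independent of list representation) *)
Definition code_set (B : seq bitseq) : seq nat := sort leq (undup (map pickle B)).

Definition code_val m N (V : valuation m N) : nat :=
  pickle [seq [seq code_set (V i j) | j <- enum 'I_N] | i <- enum 'I_m].

(* phi(V) for a formula phi, seen as a predicate on codes of valuations *)
Definition holds (phi : nat -> Prop) m N (V : valuation m N) : Prop :=
  phi (code_val V).

Definition essential m N (phi : nat -> Prop) (M : matrix_s m N) : Prop :=
  forall s, exists V : valuation m N, is_Mval M V /\ val_gt s V /\ holds phi V.

Definition diagonalizes m N (A0 A1 : pred bitseq) (V : valuation m N) : Prop :=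
  forall i, exists L R : 'I_N, {subset V i L <= A0} /\ {subset V i R <= A1}.

Definition fair (n : nat) (X : nat -> bool) (A0 A1 : pred bitseq) : Prop :=
  forall (m : nat) (phi : nat -> Prop) (M : matrix_s m (2 ^ n * m)),
    sigma1 X phi -> disjoint_matrix M -> essential phi M ->
    exists V : valuation m (2 ^ n * m),
      is_Mval M V /\ diagonalizes A0 A1 V /\ holds phi V.

(* Main.v *)
Require Import Defs.
From mathcomp Require Import all_boot.
From mathcomp Require Import zify.
From Stdlib Require Import Classical ClassicalEpsilon FunctionalExtensionality.
Set Implicit Arguments.
Unset Strict Implicit.
Unset Printing Implicit Defensive.

Fixpoint AllP (P : prog -> Prop) (gs : seq prog) : Prop :=
  match gs with [::] => True | g :: gs' => P g /\ AllP P gs' end.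

Definition prog_ind2 (P : prog -> Prop)
  (H0 : P PZero) (H1 : P PSucc) (H2 : forall i, P (PProj i)) (H3 : forall i, P (POracle i))
  (H4 : forall f gs, P f -> AllP P gs -> P (PComp f gs))
  (H5 : forall f g, P f -> P g -> P (PRec f g)) (H6 : forall f, P f -> P (PMu f)) :
  forall p, P p :=
  fix F p := match p return P p with
  | PZero => H0 | PSucc => H1 | PProj i => H2 i | POracle i => H3 i
  | PComp f gs => H4 f gs (F f)
      ((fix G gs := match gs return AllP P gs with
                    | [::] => I | g :: gs' => conj (F g) (G gs') end) gs)
  | PRec f g => H5 f g (F f) (F g)
  | PMu f => H6 f (F f) end.

Section EvalInd.
Variable X : nat -> bool.
Variable P : prog -> seq nat -> nat -> Prop.
Variable Q : seq prog -> seq nat -> seq nat -> Prop.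
Hypothesis HZ : forall args, P PZero args 0.
Hypothesis HS : forall args, P PSucc args (nth 0 args 0).+1.
Hypothesis HP : forall i args, P (PProj i) args (nth 0 args i).
Hypothesis HO : forall i args, P (POracle i) args (nat_of_bool (X (nth 0 args i))).
Hypothesis HC : forall f gs args ys y, evalList X gs args ys -> Q gs args ys ->
   eval X f ys y -> P f ys y -> P (PComp f gs) args y.
Hypothesis HR0 : forall f g rest y, eval X f rest y -> P f rest y -> P (PRec f g) (0 :: rest) y.
Hypothesis HRS : forall f g k rest z y, eval X (PRec f g) (k :: rest) z -> P (PRec f g) (k :: rest) z ->
   eval X g (k :: z :: rest) y -> P g (k :: z :: rest) y -> P (PRec f g) (k.+1 :: rest) y.
Hypothesis HM : forall f args y, eval X f (y :: args) 0 -> P f (y :: args) 0 ->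
   (forall k, k < y -> exists z, eval X f (k :: args) z.+1 /\ P f (k :: args) z.+1) ->
   P (PMu f) args y.
Hypothesis HN : forall args, Q [::] args [::].
Hypothesis HCo : forall g gs args y ys, eval X g args y -> P g args y ->
   evalList X gs args ys -> Q gs args ys -> Q (g :: gs) args (y :: ys).

Fixpoint eval_ind2 p args y (H : eval X p args y) {struct H} : P p args y :=
  match H in eval _ p args y return P p args y with
  | eZero args => HZ args
  | eSucc args => HS args
  | eProj i args => HP i args
  | eOracle i args => HO i args
  | eComp f gs args ys y Hl Hf => HC Hl (evalList_ind2 Hl) Hf (eval_ind2 Hf)
  | eRec0 f g rest y Hf => HR0 g Hf (eval_ind2 Hf)
  | eRecS f g k rest z y H1 H2 => HRS H1 (eval_ind2 H1) H2 (eval_ind2 H2)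
  | eMu f args y H0 Hlt => HM H0 (eval_ind2 H0)
      (fun k hk => match Hlt k hk with ex_intro z Hz => ex_intro _ z (conj Hz (eval_ind2 Hz)) end)
  end
with evalList_ind2 gs args ys (H : evalList X gs args ys) {struct H} : Q gs args ys :=
  match H in evalList _ gs args ys return Q gs args ys with
  | eNil args => HN args
  | eCons g gs args y ys Hg Hl => HCo Hg (eval_ind2 Hg) Hl (evalList_ind2 Hl)
  end.
End EvalInd.

Lemma eval_det X p args y : eval X p args y -> forall y', eval X p args y' -> y = y'.
Proof.
move=> H; move: p args y H.
apply: (@eval_ind2 X (fun p args y => forall y', eval X p args y' -> y = y')
   (fun gs args ys => forall ys', evalList X gs args ys' -> ys = ys')).
- by move=> args y' H; inversion H.
- by move=> args y' H; inversion H.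
- by move=> i args y' H; inversion H.
- by move=> i args y' H; inversion H.
- move=> f gs args ys y _ IHl _ IHf y' H; inversion H; subst.
  have E := IHl _ H2; subst. by apply: IHf.
- move=> f g rest y _ IHf y' H; inversion H; subst. by apply: IHf.
- move=> f g k rest z y _ IH1 _ IH2 y' H; inversion H; subst.
  match goal with Hx : eval _ (PRec _ _) _ _ |- _ => have E := IH1 _ Hx end; subst; by apply: IH2.
- move=> f args y _ IHf Hlt y' H; inversion H; subst.
  case: (ltngtP y y') => // Hyy.
  + case: (H2 y Hyy) => z Hz. by have := IHf _ Hz.
  + case: (Hlt y' Hyy) => z [_ Hz]. by have := Hz _ H1.
- by move=> args ys' H; inversion H.
- move=> g gs args y ys _ IHg _ IHl ys' H; inversion H; subst.
  match goal with Ha : eval _ _ _ _, Hb : evalList _ _ _ _ |- _ => by rewrite (IHg _ Ha) (IHl _ Hb) end.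
Qed.

Definition agree (u : nat) (X Y : nat -> bool) := forall z, z < u -> Y z = X z.

Lemma agree_mono u u' X Y : u <= u' -> agree u' X Y -> agree u X Y.
Proof. move=> Hu H z Hz; apply: H; exact: leq_trans Hz Hu. Qed.

Lemma bound_fin (R : nat -> nat -> Prop) (y : nat) :
  (forall k u u', u <= u' -> R k u -> R k u') ->
  (forall k, k < y -> exists u, R k u) -> exists u, forall k, k < y -> R k u.
Proof.
move=> Hm; elim: y => [|y IH] H; first by exists 0.
case: IH => [k Hk|u Hu]; first by apply: H; exact: ltnW.
case: (H y (ltnSn y)) => v Hv.
exists (maxn u v) => k; rewrite ltnS leq_eqVlt => /orP [/eqP->|Hk].
- apply: Hm Hv; exact: leq_maxr.
- apply: Hm (Hu k Hk); exact: leq_maxl.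
Qed.

Lemma use_eval X p args y : eval X p args y ->
  exists u, forall Y, agree u X Y -> eval Y p args y.
Proof.
move=> H; move: p args y H.
apply: (@eval_ind2 X (fun p args y => exists u, forall Y, agree u X Y -> eval Y p args y)
   (fun gs args ys => exists u, forall Y, agree u X Y -> evalList Y gs args ys)).
- by move=> args; exists 0 => Y _; constructor.
- by move=> args; exists 0 => Y _; constructor.
- by move=> i args; exists 0 => Y _; constructor.
- move=> i args; exists (nth 0 args i).+1 => Y HY.
  rewrite -(HY _ (ltnSn _)); constructor.
- move=> f gs args ys y _ [u1 H1] _ [u2 H2]; exists (maxn u1 u2) => Y HY.
  econstructor; [apply: H1 | apply: H2]; apply: agree_mono HY;
   [exact: leq_maxl | exact: leq_maxr].
- move=> f g rest y _ [u H1]; exists u => Y HY; constructor; exact: H1.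
- move=> f g k rest z y _ [u1 H1] _ [u2 H2]; exists (maxn u1 u2) => Y HY.
  econstructor; [apply: H1 | apply: H2]; apply: agree_mono HY;
   [exact: leq_maxl | exact: leq_maxr].
- move=> f args y _ [u1 H1] Hlt.
  have [u2 Hu2] : exists u, forall k, k < y -> (exists z, forall Y, agree u X Y -> eval Y f (k :: args) z.+1).
    apply: (@bound_fin (fun k u => exists z, forall Y, agree u X Y -> eval Y f (k :: args) z.+1)).
    - move=> k u u' Huu [z Hz]; exists z => Y HY; apply: Hz; exact: agree_mono HY.
    - move=> k Hk; case: (Hlt k Hk) => z [_ [u Hu]]; exists u, z; exact: Hu.
  exists (maxn u1 u2) => Y HY; constructor.
  + apply: H1; apply: agree_mono HY; exact: leq_maxl.
  + move=> k Hk; case: (Hu2 k Hk) => z Hz; exists z; apply: Hz.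
    apply: agree_mono HY; exact: leq_maxr.
- by move=> args; exists 0 => Y _; constructor.
- move=> g gs args y ys _ [u1 H1] _ [u2 H2]; exists (maxn u1 u2) => Y HY.
  constructor; [apply: H1 | apply: H2]; apply: agree_mono HY;
   [exact: leq_maxl | exact: leq_maxr].
Qed.

Section Helpers.
Variable X : nat -> bool.

Lemma comp1 f g args a y : eval X g args a -> eval X f [:: a] y -> eval X (PComp f [:: g]) args y.
Proof. move=> Hg Hf; econstructor; last exact Hf; repeat constructor; exact Hg. Qed.
Lemma comp2 f g1 g2 args a b y : eval X g1 args a -> eval X g2 args b ->
  eval X f [:: a; b] y -> eval X (PComp f [:: g1; g2]) args y.
Proof. move=> H1 H2 Hf; econstructor; last exact Hf; repeat constructor; assumption. Qed.
Lemma comp3 f g1 g2 g3 args a b c y : eval X g1 args a -> eval X g2 args b -> eval X g3 args c ->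
  eval X f [:: a; b; c] y -> eval X (PComp f [:: g1; g2; g3]) args y.
Proof. move=> H1 H2 H3 Hf; econstructor; last exact Hf; repeat constructor; assumption. Qed.

Lemma evProj i args : eval X (PProj i) args (nth 0 args i). Proof. constructor. Qed.
Lemma evProjE i args v : nth 0 args i = v -> eval X (PProj i) args v.
Proof. by move=> <-; constructor. Qed.

Fixpoint cst n := if n is n'.+1 then PComp PSucc [:: cst n'] else PZero.
Lemma ev_cst n args : eval X (cst n) args n.
Proof. elim: n => [|n IH] /=; first constructor. apply: comp1 IH _; constructor. Qed.

Lemma ev_rec f g (F : nat -> seq nat -> nat) :
  (forall rest, eval X f rest (F 0 rest)) ->
  (forall k rest, eval X g (k :: F k rest :: rest) (F k.+1 rest)) ->
  forall k rest, eval X (PRec f g) (k :: rest) (F k rest).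
Proof.
move=> Hf Hg; elim=> [|k IH] rest; first by constructor.
econstructor; [exact: IH | exact: Hg].
Qed.

Lemma ev_rec1 f g (F : nat -> nat) rest :
  eval X f rest (F 0) -> (forall k, eval X g (k :: F k :: rest) (F k.+1)) ->
  forall k, eval X (PRec f g) (k :: rest) (F k).
Proof.
move=> Hf Hg; elim=> [|k IH]; first by constructor.
econstructor; [exact: IH | exact: Hg].
Qed.

Lemma evE p args v w : eval X p args v -> v = w -> eval X p args w.
Proof. by move=> H <-. Qed.

Definition pIsZ := PRec (PComp PSucc [:: PZero]) PZero.
Lemma ev_isZ k rest : eval X pIsZ (k :: rest) (k == 0).
Proof.
apply: (@ev_rec _ _ (fun k _ => nat_of_bool (k == 0))) => [r|k' r].
- apply: comp1; constructor.
- constructor.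
Qed.

Definition pPred := PRec PZero (PProj 0).
Lemma ev_pred k rest : eval X pPred (k :: rest) k.-1.
Proof. apply: (@ev_rec _ _ (fun k _ => k.-1)) => [r|k' r]; constructor. Qed.

Definition pAdd := PRec (PProj 0) (PComp PSucc [:: PProj 1]).
Lemma ev_add a b rest : eval X pAdd (a :: b :: rest) (a + b).
Proof.
apply: (@ev_rec _ _ (fun k r => k + nth 0 r 0)) => [r|k' r]; first by constructor.
by apply: comp1; constructor.
Qed.

Definition pSub := PRec (PProj 0) (PComp pPred [:: PProj 1]).
Lemma ev_sub a x rest : eval X pSub (a :: x :: rest) (x - a).
Proof.
apply: (@ev_rec _ _ (fun k r => nth 0 r 0 - k)) => [r|k' r]; first by rewrite subn0; constructor.
apply: comp1; first by constructor.
rewrite subnS; exact: ev_pred.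
Qed.

Definition pGuard := PRec PZero (PProj 2).
Lemma ev_guard a b rest : eval X pGuard (a :: b :: rest) (if a == 0 then 0 else b).
Proof.
apply: (@ev_rec _ _ (fun k r => if k == 0 then 0 else nth 0 r 0)) => [r|k' r] /=. exact: eZero. exact: eProj.
Qed.

Definition pOdd := PRec PZero (PComp pIsZ [:: PProj 1]).
Lemma ev_odd k rest : eval X pOdd (k :: rest) (odd k).
Proof.
apply: (@ev_rec _ _ (fun k _ => nat_of_bool (odd k))) => [r|k' r]; first exact: eZero.
apply: comp1; first by constructor.
rewrite /=; have := ev_isZ (odd k') [::]; by case: (odd k').
Qed.

Definition pHalf := PRec PZero (PComp pAdd [:: PComp pOdd [:: PProj 0]; PProj 1]).
Lemma ev_half k rest : eval X pHalf (k :: rest) k./2.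
Proof.
apply: (@ev_rec _ _ (fun k _ => k./2)) => [r|k' r]; first by constructor.
apply: comp2; [apply: comp1; [constructor | exact: ev_odd] | constructor | ].
by rewrite /= uphalf_half; apply: ev_add.
Qed.

Definition pIterHalf := PRec (PProj 0) (PComp pHalf [:: PProj 1]).
Lemma ev_iterhalf x h rest : eval X pIterHalf (x :: h :: rest) (iter x half h).
Proof.
apply: (@ev_rec _ _ (fun k r => iter k half (nth 0 r 0))) => [r|k' r]; first by constructor.
apply: comp1; first by constructor.
exact: ev_half.
Qed.

Definition bitn (h x : nat) : bool := odd (iter x half h).
Definition pBit := PComp pOdd [:: PComp pIterHalf [:: PProj 1; PProj 0]].
Lemma ev_bit h x rest : eval X pBit (h :: x :: rest) (bitn h x).
Proof.
apply: comp1; last exact: ev_odd.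
apply: comp2; [constructor|constructor|]; exact: ev_iterhalf.
Qed.

End Helpers.

Section Helpers2.
Variable X : nat -> bool.

Definition pNZ := PComp pIsZ [:: PComp pIsZ [:: PProj 0]].
Lemma ev_nz a rest : eval X pNZ (a :: rest) (a != 0).
Proof.
apply: comp1; first by apply: comp1; [exact: eProj | exact: ev_isZ].
have := ev_isZ X (a == 0) [::]; by case: (a == 0).
Qed.

Definition pEq := PComp pIsZ [:: PComp pAdd [:: PComp pSub [:: PProj 0; PProj 1];
                                               PComp pSub [:: PProj 1; PProj 0]]].
Lemma ev_eq z n rest : eval X pEq (z :: n :: rest) (z == n).
Proof.
apply: comp1; last first.
  have -> : (z == n) = ((n - z) + (z - n) == 0).
    by rewrite addn_eq0 !subn_eq0 eqn_leq andbC.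
  exact: ev_isZ.
apply: comp2; last exact: ev_add.
- apply: comp2; [exact: eProj | exact: eProj | exact: ev_sub].
- apply: comp2; [exact: eProj | exact: eProj | exact: ev_sub].
Qed.

Definition pGe2 := PComp pNZ [:: PComp pPred [:: PProj 0]].
Lemma ev_ge2 c rest : eval X pGe2 (c :: rest) (2 <= c).
Proof.
apply: comp1; first by apply: comp1; [exact: eProj | exact: ev_pred].
have -> : (2 <= c) = (c.-1 != 0) by case: c => [|[|c]].
exact: ev_nz.
Qed.

Definition pLt := PComp pNZ [:: PComp pSub [:: PProj 0; PProj 1]].
Lemma ev_lt s t rest : eval X pLt (s :: t :: rest) (s < t).
Proof.
apply: comp1; first by apply: comp2; [exact: eProj | exact: eProj | exact: ev_sub].
rewrite -subn_gt0 lt0n; exact: ev_nz.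
Qed.

Definition pEq1 := PComp pGuard [:: PProj 0; PComp pIsZ [:: PComp pPred [:: PProj 0]]].
Lemma ev_eq1 c rest : eval X pEq1 (c :: rest) (c == 1).
Proof.
apply: comp2; [exact: eProj | apply: comp1; [apply: comp1; [exact: eProj|exact: ev_pred]|exact: ev_isZ] |].
have -> : nat_of_bool (c == 1) = (if c == 0 then 0 else c.-1 == 0) by case: c => [|[|c]].
exact: ev_guard.
Qed.

Lemma evL_cat gs1 gs2 args ys1 ys2 : evalList X gs1 args ys1 -> evalList X gs2 args ys2 ->
  evalList X (gs1 ++ gs2) args (ys1 ++ ys2).
Proof. elim=> //= g gs args' y ys Hg _ IH H2; constructor => //; exact: IH. Qed.

Lemma evL_proj args a n : evalList X [seq PProj i | i <- iota a n] args [seq nth 0 args i | i <- iota a n].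
Proof. elim: n a => [|n IH] a /=; constructor; [exact: eProj | exact: IH]. Qed.

Lemma evL_nseq args n : evalList X (nseq n PZero) args (nseq n 0).
Proof. elim: n => [|n IH] /=; constructor => //; exact: eZero. Qed.

End Helpers2.

Definition musc (c : nat -> nat) : nat -> nat :=
  fix sc n := if n is n'.+1 then sc n' + ((sc n' == n') && (2 <= c n')) else 0.

Definition recit (base : nat) (step : nat -> nat -> nat) : nat -> nat :=
  fix it k := if k is k'.+1 then (if it k' == 0 then 0 else step k' (it k').-1) else base.

Fixpoint cev (X : nat -> bool) (p : prog) (args : seq nat) (t : nat) {struct p} : nat :=
  match p with
  | PZero => 1
  | PSucc => (nth 0 args 0).+2
  | PProj i => (nth 0 args i).+1
  | POracle i => (nat_of_bool (X (nth 0 args i))).+1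
  | PComp f gs => let cs := [seq cev X g args t | g <- gs] in
      if all (fun c => c != 0) cs then cev X f (map predn cs) t else 0
  | PRec f g => match args with
      | [::] => 0
      | k :: rest => recit (cev X f rest t) (fun j a => cev X g (j :: a :: rest) t) k
      end
  | PMu f => let s := musc (fun k => cev X f (k :: args) t) t in
      if (s < t) && (cev X f (s :: args) t == 1) then s.+1 else 0
  end.

Fixpoint wd (p : prog) : nat :=
  match p with
  | PZero => 0 | PSucc => 1 | PProj i => i.+1 | POracle i => i.+1
  | PComp f gs => foldr maxn 0 (map wd gs)
  | PRec f g => maxn 1 (maxn (wd f).+1 (wd g).-1)
  | PMu f => (wd f).-1
  end.

Fixpoint compile (J : prog) (W sz : nat) (p : prog) {struct p} : prog :=
  match p with
  | PZero => cst 1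
  | PSucc => PComp PSucc [:: PComp PSucc [:: PProj 0]]
  | PProj i => PComp PSucc [:: PProj i]
  | POracle i => PComp PSucc [:: PComp J [:: PProj i; PProj W]]
  | PComp f gs =>
      let V := maxn (size gs) (wd f) in
      foldr (fun g acc => PComp pGuard [:: compile J W sz g; acc])
        (PComp (compile J V (size gs) f)
           ([seq PComp pPred [:: compile J W sz g] | g <- gs] ++
            nseq (V - size gs) PZero ++ [:: PProj W; PProj W.+1])) gs
  | PRec f g => if sz is s.+1 then
      PComp (PRec (compile J W.-1 s f)
        (PComp pGuard [:: PProj 1;
           PComp (compile J W.+1 s.+2 g)
             (PProj 0 :: PComp pPred [:: PProj 1] :: [seq PProj i | i <- iota 2 W.+1])]))
        [seq PProj i | i <- iota 0 W.+2]
      else PZero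
  | PMu f =>
      let cf := compile J W.+1 sz.+1 f in
      let step := PComp pAdd [:: PProj 1;
          PComp pGuard [:: PComp pEq [:: PProj 1; PProj 0];
            PComp pGuard [:: PComp pGe2 [:: PComp cf (PProj 0 :: [seq PProj i | i <- iota 2 W.+2])];
                             cst 1]]] in
      let sprog := PComp (PRec PZero step) (PProj W.+1 :: [seq PProj i | i <- iota 0 W.+2]) in
      PComp pGuard [:: PComp pLt [:: sprog; PProj W.+1];
        PComp pGuard [:: PComp pEq1 [:: PComp cf (sprog :: [seq PProj i | i <- iota 0 W.+2])];
                         PComp PSucc [:: sprog]]]
  end.

Lemma compile_recE J W s f g : compile J W s.+1 (PRec f g) =
      PComp (PRec (compile J W.-1 s f)
        (PComp pGuard [:: PProj 1;
           PComp (compile J W.+1 s.+2 g)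
             (PProj 0 :: PComp pPred [:: PProj 1] :: [seq PProj i | i <- iota 2 W.+1])]))
        [seq PProj i | i <- iota 0 W.+2].
Proof. by []. Qed.

Lemma cev_recE X f g k rest t : cev X (PRec f g) (k :: rest) t =
   recit (cev X f rest t) (fun j a => cev X g (j :: a :: rest) t) k.
Proof. by []. Qed.

Lemma compile_muE J W sz f : compile J W sz (PMu f) =
      let cf := compile J W.+1 sz.+1 f in
      let step := PComp pAdd [:: PProj 1;
          PComp pGuard [:: PComp pEq [:: PProj 1; PProj 0];
            PComp pGuard [:: PComp pGe2 [:: PComp cf (PProj 0 :: [seq PProj i | i <- iota 2 W.+2])];
                             cst 1]]] in
      let sprog := PComp (PRec PZero step) (PProj W.+1 :: [seq PProj i | i <- iota 0 W.+2]) in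
      PComp pGuard [:: PComp pLt [:: sprog; PProj W.+1];
        PComp pGuard [:: PComp pEq1 [:: PComp cf (sprog :: [seq PProj i | i <- iota 0 W.+2])];
                         PComp PSucc [:: sprog]]].
Proof. by []. Qed.

Lemma cev_muE X f args t : cev X (PMu f) args t =
   let s := musc (fun k => cev X f (k :: args) t) t in
      if (s < t) && (cev X f (s :: args) t == 1) then s.+1 else 0.
Proof. by []. Qed.

Lemma nth_cons2 (a b : nat) s i : nth 0 (a :: b :: s) i.+2 = nth 0 s i.
Proof. by []. Qed.

Lemma nth_mapiota (F : nat -> nat) a n i : i < n -> nth 0 (map F (iota a n)) i = F (a + i).
Proof. move=> Hi; rewrite (nth_map 0) ?size_iota // nth_iota //. Qed.

Lemma wd_comp_le (gs : seq prog) W : foldr maxn 0 (map wd gs) <= W -> AllP (fun g => wd g <= W) gs.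
Proof.
elim: gs => //= g gs IH; rewrite geq_max => /andP [H1 H2]; split => //; exact: IH.
Qed.

Section CompileOK.
Variable C : nat -> bool.
Variable J : prog.
Variable O : nat -> nat -> bool.
Hypothesis HJ : forall z h rest, eval C J (z :: h :: rest) (O h z).

Definition cspec p := forall W sz args args' h t, wd p <= W -> size args = sz ->
  (forall i, i < W -> nth 0 args' i = nth 0 args i) -> nth 0 args' W = h -> nth 0 args' W.+1 = t ->
  eval C (compile J W sz p) args' (cev (O h) p args t).

Lemma compile_ok p : cspec p.
Proof.
elim/prog_ind2: p.
- move=> W sz args args' h t _ _ _ _ _; exact: ev_cst.
- move=> W sz args args' h t /= HW _ Ha _ _.
  apply: comp1; first by apply: comp1; [exact: eProj | constructor].
  rewrite /= Ha //; constructor.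
- move=> i W sz args args' h t /= HW _ Ha _ _.
  apply: comp1; [exact: eProj | rewrite /= Ha //; constructor].
- move=> i W sz args args' h t /= HW _ Ha Hh _.
  apply: comp1; first by apply: comp2; [exact: eProj | exact: eProj | exact: HJ].
  rewrite /= Hh Ha //; constructor.
- move=> f gs IHf IHgs W sz args args' h t /= HW Hsz Ha Hh Ht.
  have Hall := wd_comp_le HW.
  set V := maxn (size gs) (wd f).
  set ys := [seq (cev (O h) g args t).-1 | g <- gs].
  set ys' := ys ++ nseq (V - size gs) 0 ++ [:: h; t].
  have HV : size gs <= V by exact: leq_maxl.
  have Hbody : eval C (PComp (compile J V (size gs) f)
           ([seq PComp pPred [:: compile J W sz g] | g <- gs] ++
            nseq (V - size gs) PZero ++ [:: PProj W; PProj W.+1])) args'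
           (cev (O h) f ys t).
    econstructor; last first.
    + apply: (IHf V (size gs) ys ys' h t).
      * exact: leq_maxr.
      * by rewrite size_map.
      * move=> i Hi; rewrite /ys' nth_cat size_map.
        case: ifP => // Hig; rewrite nth_cat size_nseq.
        rewrite ltn_sub2rE ?Hi //; last by rewrite leqNgt Hig.
        rewrite nth_nseq ltn_sub2rE ?Hi ?nth_default // ?size_map leqNgt Hig //.
      * rewrite /ys' nth_cat size_map ltnNge HV /= nth_cat size_nseq ltnn subnn //.
      * rewrite /ys' nth_cat size_map ltnNge (leqW HV) /= nth_cat size_nseq.
        by rewrite (subSn HV) ltnNge leqnSn /= subSnn.
    + apply: evL_cat; last apply: evL_cat.
      * move: IHgs Hall; rewrite /ys; clear HW IHf; elim: gs {V ys ys' HV} => [|g gs IH] /=; first by constructor.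
        move=> [Hg Hgs] [Hwg Hwgs]; constructor; last exact: IH.
        apply: comp1; [exact: (Hg W sz args args' h t Hwg Hsz Ha Hh Ht) | exact: ev_pred].
      * exact: evL_nseq.
      * constructor; first by rewrite -Hh; exact: eProj.
        constructor; first by rewrite -Ht; exact: eProj.
        constructor.
  have -> : [seq c.-1 | c <- [seq cev (O h) g args t | g <- gs]] = ys by rewrite -map_comp.
  move: Hbody; set body := PComp (compile J V (size gs) f) _.
  clearbody body.
  generalize (cev (O h) f ys t) => bv Hbody.
  clear V ys ys' HV IHf HW.
  elim: gs IHgs Hall => [|g gs IH] /=; first done.
  move=> [Hg Hgs] [Hwg Hwgs].
  apply: comp2; first exact: (Hg W sz args args' h t Hwg Hsz Ha Hh Ht).
  + exact: IH.
  + case: (cev (O h) g args t) => [|c] /=; first exact: ev_guard.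
    exact: ev_guard.
- move=> f g IHf IHg W sz args args' h t HW Hsz Ha Hh Ht; rewrite [wd _]/= in HW.
  case: W HW Ha Hh Ht => [|W] HW Ha Hh Ht.
    by move: HW; rewrite geq_max.
  move: HW; rewrite !geq_max => /andP [_ HW]; move: HW => /andP [Hwf Hwg].
  case: args Hsz Ha => [|k rest] Hsz Ha; first by rewrite -Hsz; exact: eZero.
  rewrite -Hsz /size -/(size rest) compile_recE cev_recE.
  econstructor; first exact: evL_proj.
  have -> : [seq nth 0 args' i | i <- iota 0 W.+3] = k :: [seq nth 0 args' i | i <- iota 1 W.+2].
    by rewrite /= Ha.
  set rest'' := [seq nth 0 args' i | i <- iota 1 W.+2].
  have Hr : forall i, i < W.+2 -> nth 0 rest'' i = nth 0 args' i.+1.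
    by move=> i Hi; rewrite nth_mapiota.
  set F := recit _ _.
  apply: (@ev_rec1 C _ _ F).
  + apply: IHf => //.
    * move=> i Hi; rewrite /= in Hi; rewrite Hr; last lia. rewrite Ha //; lia.
    * by rewrite Hr.
    * by rewrite Hr.
  + move=> j; apply: comp2; [exact: eProj | | ].
    * econstructor.
      - constructor; first exact: eProj.
        constructor; first by apply: comp1; [exact: eProj | exact: ev_pred].
        exact: evL_proj.
      - apply: (IHg _ _ [:: j, (F j).-1 & rest] _ h t) => //.
        + by rewrite -[W.+2]/(W.+1.+1) (leq_trans (leqSpred _)) // ltnS (leq_trans Hwg).
        + move=> [|[|i]] Hi //; rewrite nth_cons2 nth_mapiota; last lia.
          rewrite add2n !nth_cons2 Hr; last lia. rewrite Ha; last lia. by [].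
        + rewrite nth_cons2 nth_mapiota; last lia.
          by rewrite -[2 + W]/(W.+2) nth_cons2 Hr; last lia.
        + rewrite nth_cons2 nth_mapiota; last lia.
          by rewrite -[2 + W.+1]/(W.+3) nth_cons2 Hr; last lia.
    * exact: ev_guard.
- move=> f IHf W sz args args' h t HW Hsz Ha Hh Ht; rewrite [wd _]/= in HW.
  rewrite compile_muE cev_muE; cbv zeta.
  set c := fun k => cev (O h) f (k :: args) t.
  have Hc : forall n B, (forall i, i < W.+2 -> nth 0 B i = nth 0 args' i) ->
      eval C (compile J W.+1 sz.+1 f) (n :: B) (c n).
    move=> n B HB; apply: IHf => //.
    + move: HW; rewrite /=; lia.
    + by rewrite /= Hsz.
    + move=> [|i] Hi //=; rewrite HB; last lia. rewrite Ha; last lia. by [].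
    + by rewrite /= HB.
    + by rewrite /= HB.
  set A := [seq nth 0 args' i | i <- iota 0 W.+2].
  have HA : forall i, i < W.+2 -> nth 0 A i = nth 0 args' i.
    by move=> i Hi; rewrite nth_mapiota.
  set step := PComp pAdd _.
  set sprog := PComp (PRec PZero step) _.
  have Hs : eval C sprog args' (musc c t).
    econstructor.
    - constructor; first exact: eProj.
      exact: evL_proj.
    - rewrite Ht; apply: (@ev_rec1 C _ _ (musc c)); first exact: eZero.
      move=> n; apply: comp2; [exact: eProj | | ].
      + apply: comp2.
        * apply: comp2; [exact: eProj | exact: eProj | exact: ev_eq].
        * apply: comp2; [ | exact: ev_cst | exact: ev_guard].
          apply: comp1; [ | exact: ev_ge2].
          econstructor.
          - constructor; first exact: eProj.
            exact: evL_proj.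
          - apply: Hc => i Hi; rewrite nth_mapiota //= HA //.
        * exact: ev_guard.
      + apply: evE; first exact: ev_add.
        change (musc c n.+1) with (musc c n + ((musc c n == n) && (2 <= c n))); congr (_ + _).
        by case: (musc c n == n); case: (2 <= c n).
  apply: comp2.
  + apply: comp2; [exact: Hs | exact: eProj | rewrite Ht; exact: ev_lt].
  + apply: comp2.
    * apply: comp1; last exact: ev_eq1.
      econstructor.
      - constructor; first exact: Hs.
        exact: evL_proj.
      - apply: Hc => i Hi; rewrite nth_mapiota //.
    * apply: comp1; [exact: Hs | constructor].
    * exact: ev_guard.
  + apply: evE; first exact: ev_guard.
    rewrite /c; case: (musc _ t < t) => //=; case: (_ == 1) => //.
Qed.
End CompileOK.

Lemma musc_le c n : musc c n <= n.
Proof. elim: n => //= n IH; case: (_ == n) => /=; case: (2 <= c n) => /=; lia. Qed.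

Lemma musc_good c n k : k < musc c n -> 2 <= c k.
Proof.
elim: n => //= n IH.
case: (boolP ((musc c n == n) && (2 <= c n))) => [/andP [/eqP E H2]|_] /=.
- rewrite addn1 ltnS leq_eqVlt => /orP [/eqP ->|/IH //]; by rewrite E.
- rewrite addn0; exact: IH.
Qed.

Lemma musc_stop c n : musc c n < n -> c (musc c n) < 2.
Proof.
elim: n => //= n IH.
have := musc_le c n.
case: (boolP (musc c n == n)) => [/eqP E|Hne] /= Hle.
- case: (boolP (2 <= c n)) => H2 /=; first by move=> H; exfalso; lia.
  rewrite addn0 E => _; by rewrite ltnNge H2.
- rewrite addn0 => H; apply: IH; rewrite ltn_neqAle Hle Hne //.
Qed.

Lemma musc_uniq c n s : s < n -> (forall k, k < s -> 2 <= c k) -> c s < 2 -> musc c n = s.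
Proof.
move=> Hs Hg Hc.
have H1 : forall m, m <= s -> musc c m = m.
  elim=> //= m IH Hm; rewrite IH ?eqxx ?Hg //=; [lia | lia].
elim: n Hs => // n IH; rewrite ltnS leq_eqVlt => /orP [/eqP <-|Hlt] /=.
- by rewrite H1 // eqxx /= leqNgt Hc addn0.
- rewrite IH // (_ : (s == n) = false) ?addn0 //; apply/eqP; lia.
Qed.

Lemma cev_sound X p : forall args t y, cev X p args t = y.+1 -> eval X p args y.
Proof.
elim/prog_ind2: p.
- by move=> args t y [<-]; constructor.
- by move=> args t y [<-]; constructor.
- by move=> i args t y [<-]; constructor.
- by move=> i args t y [<-]; constructor.
- move=> f gs IHf IHgs args t y /=.
  case: ifP => // Hall Hf.
  econstructor; last exact: (IHf _ _ _ Hf).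
  elim: gs IHgs Hall {Hf} => [|g gs IH] /=; first by constructor.
  move=> [Hg Hgs] /andP [Hnz Hall]; constructor; last exact: IH.
  apply: (Hg _ t); by case: (cev X g args t) Hnz.
- move=> f g IHf IHg [|k rest] t y //; rewrite cev_recE.
  elim: k y => [|k IH] y /=; first by move/IHf; constructor.
  case: ifP => // Hz Hg.
  move: Hz IH Hg; case: (recit _ _ k) => // z _ IH Hg.
  econstructor; first exact: (IH z erefl).
  exact: (IHg _ _ _ Hg).
- move=> f IHf args t y; rewrite cev_muE /=.
  case: ifP => // /andP [Hlt /eqP Hc1] [<-].
  constructor; first exact: (IHf _ _ _ Hc1).
  move=> k Hk; have := musc_good Hk.
  case E: (cev X f (k :: args) t) => [|[|z]] // _.
  exists z; exact: (IHf _ _ _ E).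
Qed.

Lemma cev_complete X p args y : eval X p args y ->
  exists t0, forall t, t0 <= t -> cev X p args t = y.+1.
Proof.
move=> H; move: p args y H.
apply: (@eval_ind2 X (fun p args y => exists t0, forall t, t0 <= t -> cev X p args t = y.+1)
   (fun gs args ys => exists t0, forall t, t0 <= t -> [seq cev X g args t | g <- gs] = map succn ys)).
- by move=> args; exists 0.
- by move=> args; exists 0.
- by move=> i args; exists 0.
- by move=> i args; exists 0.
- move=> f gs args ys y _ [t1 H1] _ [t2 H2]; exists (maxn t1 t2) => t Ht /=.
  rewrite H1; last by apply: leq_trans Ht; exact: leq_maxl.
  have -> : all (fun c => c != 0) (map succn ys) = true by elim: ys {H1 H2}.
  have -> : map predn (map succn ys) = ys by elim: ys {H1 H2} => //= a l ->.
  apply: H2; apply: leq_trans Ht; exact: leq_maxr.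
- move=> f g rest y _ [t1 H1]; exists t1 => t Ht; rewrite cev_recE /=; exact: H1.
- move=> f g k rest z y _ [t1 H1] _ [t2 H2]; exists (maxn t1 t2) => t Ht.
  rewrite cev_recE /=. have := H1 t; rewrite cev_recE => ->; last by apply: leq_trans Ht; exact: leq_maxl.
  rewrite /= H2 //; apply: leq_trans Ht; exact: leq_maxr.
- move=> f args y _ [t1 H1] Hlt.
  have [t2 Ht2] : exists u, forall k, k < y -> exists z, forall t, u <= t -> cev X f (k :: args) t = z.+2.
    apply: (@bound_fin (fun k u => exists z, forall t, u <= t -> cev X f (k :: args) t = z.+2)).
    - move=> k u u' Huu [z Hz]; exists z => t Ht; apply: Hz; exact: leq_trans Huu Ht.
    - move=> k Hk; case: (Hlt k Hk) => z [_ [u Hu]]; by exists u, z.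
  exists (maxn (maxn t1 t2) y.+1) => t Ht; rewrite cev_muE /=.
  have Ht1 : t1 <= t by lia.
  have Htt2 : t2 <= t by lia.
  have Hyt : y < t by lia.
  have Hm : musc (fun k => cev X f (k :: args) t) t = y.
    apply: musc_uniq => //; last by rewrite H1.
    move=> k Hk; case: (Ht2 k Hk) => z Hz; by rewrite Hz.
  by rewrite Hm H1 // Hyt.
- by move=> args; exists 0.
- move=> g gs args y ys _ [t1 H1] _ [t2 H2]; exists (maxn t1 t2) => t Ht /=.
  rewrite H1 ?H2 //; [lia | lia].
Qed.

Lemma halts_cev X p args : halts X p args <-> exists t, cev X p args t != 0.
Proof.
split.
- move=> [y /cev_complete [t0 Ht0]]; exists t0; by rewrite Ht0.
- move=> [t]; case E: (cev X p args t) => [|y] // _; exists y; exact: cev_sound E.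
Qed.


Fixpoint bsum (F : nat -> nat) n := if n is n'.+1 then bsum F n' + F n' else 0.

Lemma bsum_eq0 F n : (bsum F n == 0) = [forall k : 'I_n, F k == 0].
Proof.
elim: n => [|n IH] /=; first by apply/esym/forallP => [[]].
rewrite addn_eq0 IH; apply/andP/forallP.
- move=> [/forallP H1 H2] [k Hk] /=.
  have : k <= n := Hk.
  rewrite leq_eqVlt => /orP [/eqP E|Hlt]; first by rewrite E.
  exact: (H1 (Ordinal Hlt)).
- move=> H; split; last exact: (H (Ordinal (ltnSn n))).
  apply/forallP => [[k Hk]]; exact: (H (Ordinal (leqW Hk))).
Qed.

Section Search.
Variable C : nat -> bool.
Variable J : prog.
Variable O : nat -> nat -> bool.
Hypothesis HJ : forall z h rest, eval C J (z :: h :: rest) (O h z).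
Variable p : prog.

Definition Ws := maxn 1 (wd p).
Definition cprogS := PComp (compile J Ws 1 p)
   (PProj 3 :: nseq Ws.-1 PZero ++ [:: PProj 0; PProj 2]).
Definition stepS := PComp pAdd [:: PProj 1; PComp pNZ [:: cprogS]].
Definition DS := PComp pIsZ [:: PComp (PRec PZero stepS) [:: PComp PSucc [:: PProj 0]; PProj 0; PProj 1]].
Definition QS := PMu DS.

Definition Fs x e n := nat_of_bool (cev (O n) p [:: x] e != 0).

Lemma ev_cprogS n z e x rest : eval C cprogS (n :: z :: e :: x :: rest) (cev (O n) p [:: x] e).
Proof.
have HW : 1 <= Ws by exact: leq_maxl.
econstructor.
- constructor; first exact: eProj.
  apply: evL_cat; first exact: evL_nseq.
  constructor; first exact: eProj.
  constructor; first exact: eProj.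
  constructor.
- apply: compile_ok => //.
  + exact: leq_maxr.
  + move=> [|i] Hi //=; rewrite nth_cat size_nseq; case: ifP => Hi2.
    * by rewrite nth_nseq Hi2; case: i {Hi Hi2}.
    * exfalso; move: Hi2 => /negbT; rewrite -leqNgt; lia.
  + case: Ws HW => [|w] // _; by rewrite /= nth_cat size_nseq ltnn subnn.
  + case: Ws HW => [|w] // _; by rewrite /= nth_cat size_nseq ltnNge leqnSn /= subSnn.
Qed.

Lemma ev_DS e x : eval C DS [:: e; x] (bsum (Fs x e) e.+1 == 0).
Proof.
apply: comp1; last exact: ev_isZ.
apply: comp3; [apply: comp1; [exact: eProj | constructor] | exact: eProj | exact: eProj |].
apply: (@ev_rec1 C _ _ (bsum (Fs x e))); first exact: eZero.
move=> n; apply: comp2; [exact: eProj | apply: comp1; [exact: ev_cprogS | exact: ev_nz] |].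
exact: ev_add.
Qed.

Lemma sigma1_search : sigma1 C (fun x => exists h, halts (O h) p [:: x]).
Proof.
exists QS => x; split.
- move=> [h /halts_cev [t Ht]].
  case E: (cev (O h) p [:: x] t) Ht => [|y] // _.
  have [t0 Ht0] := cev_complete (cev_sound E).
  have Hex : exists e, bsum (Fs x e) e.+1 != 0.
    exists (maxn h t0); rewrite bsum_eq0; apply/forallP => H.
    have := H (@Ordinal (maxn h t0).+1 h (leq_maxl h t0)).
    by rewrite /Fs /= Ht0 ?leq_maxr.
  have [e0 He0 Hmin] := ex_minnP Hex.
  exists e0; constructor.
  + have := ev_DS e0 x; by rewrite (negbTE He0).
  + move=> k Hk; exists 0; have := ev_DS k x.
    case: (boolP (bsum (Fs x k) k.+1 == 0)) => // H0.
    by have := Hmin k H0; rewrite leqNgt Hk.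
- move=> [y Hy]; inversion Hy; subst.
  have := eval_det (ev_DS y x) H0.
  case: (boolP (bsum (Fs x y) y.+1 == 0)) => // Hnz _.
  move: Hnz; rewrite bsum_eq0 negb_forall => /existsP [[n Hn] /=].
  rewrite /Fs; case: (boolP (cev (O n) p [:: x] y != 0)) => // Hc _.
  exists n; apply/halts_cev; by exists y.
Qed.
End Search.

Fixpoint codeb (P : nat -> bool) n := if n is n'.+1 then P 0 + (codeb (fun x => P x.+1) n').*2 else 0.

Lemma iter_half0 x : iter x half 0 = 0.
Proof. by elim: x => //= x ->. Qed.

Lemma bit_code n P x : bitn (codeb P n) x = (x < n) && P x.
Proof.
rewrite /bitn; elim: n P x => [|n IH] P x /=; first by rewrite iter_half0.
case: x => [|x] /=.
- by rewrite oddD odd_double addbF oddb.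
- by rewrite -iterS iterSr half_bit_double IH.
Qed.

Lemma bitn0 x : bitn 0 x = false.
Proof. by rewrite /bitn iter_half0. Qed.

Section Forcing.
Variable C : nat -> bool.

Definition Jprog (h0 : nat) (yp : prog) : prog :=
  let hz := PComp pHalf [:: PProj 0] in
  let oddz := PComp pOdd [:: PProj 0] in
  let cz := PComp (POracle 0) [:: hz] in
  let b0 := PComp pBit [:: cst h0; hz] in
  let bh := PComp pBit [:: PProj 1; hz] in
  let yz := PComp yp [:: hz] in
  let inner := PComp pNZ [:: PComp pAdd [:: b0; PComp pGuard [:: bh; yz]]] in
  PComp pAdd [:: PComp pGuard [:: oddz; cz]; PComp pGuard [:: PComp pIsZ [:: oddz]; inner]].

Definition Oset (h0 : nat) (Y : nat -> bool) (h : nat) : nat -> bool :=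
  join (fun x => bitn h0 x || (bitn h x && Y x)) C.

Lemma ev_J h0 yp (Y : nat -> bool) : (forall x, eval C yp [:: x] (Y x)) ->
  forall z h rest, eval C (Jprog h0 yp) (z :: h :: rest) (Oset h0 Y h z).
Proof.
move=> HY z h rest.
have Hhz : eval C (PComp pHalf [:: PProj 0]) (z :: h :: rest) z./2.
  apply: comp1; [exact: eProj | exact: ev_half].
have Hoz : eval C (PComp pOdd [:: PProj 0]) (z :: h :: rest) (odd z).
  apply: comp1; [exact: eProj | exact: ev_odd].
apply: comp2.
- apply: comp2; [exact: Hoz | apply: comp1; [exact: Hhz | constructor] | exact: ev_guard].
- apply: comp2; [apply: comp1; [exact: Hoz | exact: ev_isZ] | | exact: ev_guard].
  apply: comp1; last exact: ev_nz.
  apply: comp2; last exact: ev_add.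
  + apply: comp2; [exact: ev_cst | exact: Hhz | exact: ev_bit].
  + apply: comp2; last exact: ev_guard.
    * apply: comp2; [exact: eProj | exact: Hhz | exact: ev_bit].
    * apply: comp1; [exact: Hhz | exact: HY].
- apply: evE; first exact: ev_add.
  rewrite /Oset /join /=.
  case: (odd z) => /=; first by case: (C _).
  by case: (bitn h0 _); case: (bitn h _); case: (Y _).
Qed.

Record cond := Cond { ch : nat; ca : nat; cY : nat -> bool; cyp : prog }.

Definition valid (c : cond) : Prop :=
  [/\ (forall x, bitn (ch c) x -> x <= ca c),
      (forall x, cY c x -> ca c < x),
      infinite_set (cY c) &
      (forall x, eval C (cyp c) [:: x] (cY c x))].

Definition sat (c : cond) (G : nat -> bool) : Prop :=
  forall x, (x <= ca c -> G x = bitn (ch c) x) /\ (ca c < x -> G x -> cY c x).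

Definition ext (c' c : cond) : Prop :=
  [/\ ca c <= ca c',
      (forall x, x <= ca c -> bitn (ch c') x = bitn (ch c) x),
      (forall x, ca c < x -> x <= ca c' -> bitn (ch c') x -> cY c x) &
      (forall x, cY c' x -> cY c x)].

Lemma ext_refl c : ext c c.
Proof.
split => // x Hx Hx2; exfalso; move: Hx Hx2; rewrite ltnNge => /negP; done.
Qed.

Lemma ext_trans c1 c2 c3 : ext c1 c2 -> ext c2 c3 -> ext c1 c3.
Proof.
move=> [H1 H2 H3 H4] [K1 K2 K3 K4]; split.
- exact: leq_trans K1 H1.
- move=> x Hx; rewrite H2 ?K2 //; exact: leq_trans Hx K1.
- move=> x Hx Hx2 Hb; case: (leqP x (ca c2)) => Hxc.
  + apply: K3 => //; by rewrite -H2.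
  + by apply: K4; apply: H3.
- move=> x /H4; exact: K4.
Qed.

Lemma sat_ext c' c G : ext c' c -> sat c' G -> sat c G.
Proof.
move=> [H1 H2 H3 H4] HG x; split.
- move=> Hx; rewrite -H2 //; apply: (proj1 (HG x)); exact: leq_trans Hx H1.
- move=> Hx Gx; case: (leqP x (ca c')) => Hxc.
  + apply: H3 => //; by rewrite -(proj1 (HG x) Hxc).
  + by apply: H4; apply: (proj2 (HG x)).
Qed.

(* commit a finite subset K of the reservoir, bounded by b *)
Definition commit (c : cond) (K : nat -> bool) (b : nat) : cond :=
  Cond (codeb (fun z => bitn (ch c) z || K z) b.+1) b
       (fun x => cY c x && (b < x))
       (PComp pGuard [:: cyp c; PComp pLt [:: cst b; PProj 0]]).

Lemma commit_ok c (K : nat -> bool) b : valid c -> ca c <= b -> (forall z, K z -> cY c z) ->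
  valid (commit c K b) /\ ext (commit c K b) c /\
  (forall z, z <= b -> bitn (ch (commit c K b)) z = bitn (ch c) z || K z).
Proof.
move=> [V1 V2 V3 V4] Hb HK.
have Hbit : forall z, z <= b -> bitn (ch (commit c K b)) z = bitn (ch c) z || K z.
  by move=> z Hz; rewrite /commit bit_code ltnS Hz.
split; [split | split; [split|]] => //.
- move=> x; rewrite /commit bit_code; by case/andP.
- by move=> x /andP [].
- move=> k; case: (V3 (maxn k b.+1)) => x [Hx Yx]; exists x; split.
  + exact: leq_trans (leq_maxl _ _) Hx.
  + rewrite /commit /= Yx /=; apply: leq_trans Hx; exact: leq_maxr.
- move=> x; apply: comp2; [exact: V4 | | ].
  + apply: comp2; [exact: ev_cst | exact: eProj | exact: ev_lt].
  + apply: evE; first exact: ev_guard.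
    by rewrite /commit /=; case: (cY c x); case: (b < x).
- move=> x Hx; rewrite Hbit; last exact: leq_trans Hx Hb.
  case E: (K x) => /=; last by rewrite orbF.
  have := V2 _ (HK _ E); by rewrite ltnNge Hx.
- move=> x Hx Hxb; rewrite Hbit // => /orP [/V1|/HK //]; by rewrite leqNgt Hx.
- by move=> x /andP [].
Qed.

End Forcing.

Lemma leq_half z : z./2 <= z.
Proof. by rewrite leq_half_double -addnn leqW // leq_addr. Qed.

Section Steps.
Variable C : nat -> bool.

Lemma coh_step (R : nat -> nat -> bool) i c : unif_computable C R -> valid C c ->
  exists c', [/\ valid C c', ext c' c &
     ((forall x, cY c' x -> R i x) \/ (forall x, cY c' x -> ~~ R i x))].
Proof.
move=> [rp Hrp] [V1 V2 V3 V4].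
have HR : forall x, eval C (PComp rp [:: cst i; PProj 0]) [:: x] (R i x).
  move=> x; apply: comp2; [exact: ev_cst | exact: eProj | exact: Hrp].
case: (classic (infinite_set (fun x => cY c x && R i x))) => Hinf.
- exists (Cond (ch c) (ca c) (fun x => cY c x && R i x) (PComp pGuard [:: cyp c; PComp rp [:: cst i; PProj 0]])).
  split.
  + split => //=.
    * by move=> x /andP [/V2].
    * move=> x; apply: comp2; [exact: V4 | exact: HR | ].
      apply: evE; first exact: ev_guard. by case: (cY c x); case: (R i x).
  + split => //= [x Hx Hx2|x /andP [] //]; exfalso; move: Hx Hx2; rewrite ltnNge => /negP; done.
  + by left => x /andP [].
- have [k Hk] : exists k, forall x, k <= x -> cY c x -> ~~ R i x.
    apply: NNPP => Hn; apply: Hinf => k.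
    apply: NNPP => Hn2; apply: Hn; exists k => x Hx Yx.
    apply/negP => Rx; apply: Hn2; exists x; by rewrite Yx Rx.
  exists (Cond (ch c) (ca c) (fun x => cY c x && ~~ R i x)
     (PComp pGuard [:: cyp c; PComp pIsZ [:: PComp rp [:: cst i; PProj 0]]])).
  split.
  + split => //=.
    * by move=> x /andP [/V2].
    * move=> k'; case: (V3 (maxn k k')) => x [Hx Yx]; exists x; split.
      - exact: leq_trans (leq_maxr _ _) Hx.
      - rewrite Yx /=; apply: Hk => //; exact: leq_trans (leq_maxl _ _) Hx.
    * move=> x; apply: comp2; [exact: V4 | apply: comp1; [exact: HR | exact: ev_isZ] | ].
      apply: evE; first exact: ev_guard. by case: (cY c x); case: (R i x).
  + split => //= [x Hx Hx2|x /andP [] //]; exfalso; move: Hx Hx2; rewrite ltnNge => /negP; done.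
  + by right => x /andP [].
Qed.

Lemma elem_step c k : valid C c ->
  exists c', [/\ valid C c', ext c' c & exists x, [/\ k <= x, x <= ca c' & bitn (ch c') x]].
Proof.
move=> Hv; have [V1 V2 V3 V4] := Hv.
case: (V3 k) => x [Hkx Yx].
have [Hv' [He Hb]] := @commit_ok C c (fun z => z == x) x Hv (ltnW (V2 _ Yx))
    (fun z => fun H : z == x => (eq_ind_r (fun z => cY c z) Yx (eqP H))).
exists (commit c (fun z => z == x) x); split => //.
exists x; split => //; rewrite Hb // eqxx; exact: orbT.
Qed.

Definition phiG (G : nat -> bool) (p : prog) : nat -> Prop := fun x => halts (join G C) p [:: x].

Definition reqOK (A0 A1 : pred bitseq) (m N : nat) (p : prog) (M : matrix_s m N) (G : nat -> bool) : Prop :=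
  disjoint_matrix M -> essential (phiG G p) M ->
  exists V : valuation m N, [/\ is_Mval M V, diagonalizes A0 A1 V & holds (phiG G p) V].

Lemma fair_step n A0 A1 c m p (M : matrix_s m (2 ^ n * m)) :
  fair n C A0 A1 -> valid C c ->
  exists c', [/\ valid C c', ext c' c & forall G, sat c' G -> reqOK A0 A1 p M G].
Proof.
move=> Hfair Hv; have [V1 V2 V3 V4] := Hv.
set O := Oset C (ch c) (cY c).
have HJ := ev_J (ch c) V4.
pose psi := fun x => exists h, halts (O h) p [:: x].
have Hs : sigma1 C psi := sigma1_search HJ p.
case: (classic (disjoint_matrix M /\ essential psi M)) => [[Hd He]|Hno].
- have [V [HV Hdiag Hpsi]] : exists V, [/\ is_Mval M V, diagonalizes A0 A1 V & holds psi V].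
    have [V [HV [Hdiag Hpsi]]] := Hfair m psi M Hs Hd He; by exists V.
  case: Hpsi => h [y Hy].
  have [u Hu] := use_eval Hy.
  set b := maxn (ca c) u.
  have [Hv' [He' Hb]] := @commit_ok C c (fun z => bitn h z && cY c z) b Hv (leq_maxl _ _)
     (fun z H => proj2 (andP H)).
  exists (commit c (fun z => bitn h z && cY c z) b); split => // G HG _ _.
  exists V; split => //; exists y; apply: Hu => z Hz.
  rewrite /O /Oset /join; case: (odd z) => //.
  have Hz2 : z./2 <= b.
    apply: leq_trans (leq_maxr (ca c) u); apply: ltnW; apply: leq_ltn_trans Hz.
    exact: leq_half.
  by rewrite (proj1 (HG _) Hz2) Hb.
- exists c; split => //; first exact: ext_refl.
  move=> G HG Hd He; exfalso; apply: Hno; split => // s.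
  case: (He s) => V [HV [Hgt [y Hy]]].
  exists V; split => //; split => //.
  have [u Hu] := use_eval Hy.
  exists (codeb (fun z => G z && (ca c < z)) u); exists y; apply: Hu => z Hz.
  rewrite /O /Oset /join; case: (odd z) => //.
  have Hz2 : z./2 < u by apply: leq_ltn_trans Hz; exact: leq_half.
  rewrite bit_code Hz2 /=.
  case: (leqP z./2 (ca c)) => Hle.
  + by rewrite (proj1 (HG _) Hle) andbF orbF.
  + have -> : bitn (ch c) z./2 = false by apply/negP => /V1; rewrite leqNgt Hle.
    rewrite /=; case E: (G z./2) => //=; exact: (proj2 (HG _) Hle E).
Qed.

End Steps.

Fixpoint enc (p : prog) : GenTree.tree nat :=
  match p with
  | PZero => GenTree.Node 0 [::]
  | PSucc => GenTree.Node 1 [::]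
  | PProj i => GenTree.Node 2 [:: GenTree.Leaf i]
  | POracle i => GenTree.Node 3 [:: GenTree.Leaf i]
  | PComp f gs => GenTree.Node 4 (enc f :: map enc gs)
  | PRec f g => GenTree.Node 5 [:: enc f; enc g]
  | PMu f => GenTree.Node 6 [:: enc f]
  end.

Fixpoint dec (t : GenTree.tree nat) : prog :=
  match t with
  | GenTree.Leaf _ => PZero
  | GenTree.Node n ts =>
      match n, ts with
      | 1, _ => PSucc
      | 2, GenTree.Leaf i :: _ => PProj i
      | 3, GenTree.Leaf i :: _ => POracle i
      | 4, f :: gs => PComp (dec f) (map dec gs)
      | 5, f :: g :: _ => PRec (dec f) (dec g)
      | 6, f :: _ => PMu (dec f)
      | _, _ => PZero
      end
  end.

Lemma decK p : dec (enc p) = p.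
Proof.
elim/prog_ind2: p => //=.
- move=> f gs -> H; congr PComp; elim: gs H => //= g gs IH [-> /IH ->] //.
- by move=> f g -> ->.
- by move=> f ->.
Qed.

Definition RT := (nat * GenTree.tree nat * seq (seq bitseq))%type.

Definition Mof n m (L : seq (seq bitseq)) : matrix_s m (2 ^ n * m) :=
  fun i j => nth [::] (nth [::] L i) j.
Definition Lof m N (M : matrix_s m N) : seq (seq bitseq) :=
  [seq [seq M i j | j <- enum 'I_N] | i <- enum 'I_m].

Lemma Mof_Lof n m (M : matrix_s m (2 ^ n * m)) : @Mof n m (Lof M) = M.
Proof.
apply: functional_extensionality => i; apply: functional_extensionality => j.
rewrite /Mof /Lof (nth_map i) ?size_enum_ord // nth_ord_enum.
by rewrite (nth_map j) ?size_enum_ord // nth_ord_enum.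
Qed.

Section Main.
Variable C : nat -> bool.
Variable n : nat.
Variables A0 A1 : pred bitseq.
Variable R : nat -> nat -> bool.

Definition Pk (k : nat) (c : cond) : Prop :=
  [/\ (forall x, cY c x -> R k x) \/ (forall x, cY c x -> ~~ R k x),
      exists x, [/\ k <= x, x <= ca c & bitn (ch c) x] &
      match @unpickle RT k with
      | Some (m, tr, L) => forall G, sat c G -> reqOK C A0 A1 (dec tr) (@Mof n m L) G
      | None => True
      end].

Lemma stage k c : fair n C A0 A1 -> unif_computable C R -> valid C c ->
  exists c', [/\ valid C c', ext c' c & Pk k c'].
Proof.
move=> Hfair HR Hv.
have [c1 [Hv1 He1 HA]] := coh_step k HR Hv.
have [c2 [Hv2 He2 HB]] := elem_step k Hv1.
have [c3 [Hv3 He3 HC]] : exists c3, [/\ valid C c3, ext c3 c2 &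
      match @unpickle RT k with
      | Some (m, tr, L) => forall G, sat c3 G -> reqOK C A0 A1 (dec tr) (@Mof n m L) G
      | None => True
      end].
  case: (@unpickle RT k) => [[[m tr] L]|]; last by exists c2; split => //; exact: ext_refl.
  exact: fair_step.
exists c3; split => //.
- exact: ext_trans He3 (ext_trans He2 He1).
- have He32 := ext_trans He3 He2.
  case: He32 => _ _ _ HY; case: He3 => Hca Hbit _ _.
  split => //.
  + case: HA => H; [left|right] => x /HY Hx; exact: H.
  + case: HB => x [Hkx Hxa Hb]; exists x; split => //.
    * exact: leq_trans Hxa Hca.
    * by rewrite Hbit.
Qed.

End Main.

Definition c0 : cond := Cond 0 0 (fun x => 0 < x) (PComp pNZ [:: PProj 0]).

Lemma valid_c0 C : valid C c0.
Proof.
split => //=.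
- by move=> x; rewrite bitn0.
- by move=> k; exists k.+1; split.
- move=> x; apply: comp1; [exact: eProj | rewrite lt0n; exact: ev_nz].
Qed.

Theorem mainTheorem8 :
  forall n : nat, 1 <= n ->
  forall (A0 A1 : pred bitseq) (C : nat -> bool),
    fair n C A0 A1 ->
    forall R : nat -> nat -> bool, unif_computable C R ->
    exists G : nat -> bool, cohesive R G /\ fair n (join G C) A0 A1.
Proof.
move=> n _ A0 A1 C Hfair R HR.
have Hst : forall k c, exists c', valid C c -> [/\ valid C c', ext c' c & Pk C n A0 A1 R k c'].
  move=> k c; case: (classic (valid C c)) => Hv.
  - have [c' H] := stage k Hfair HR Hv; by exists c'.
  - by exists c.
pose f k c := proj1_sig (constructive_indefinite_description _ (Hst k c)).
have Hf : forall k c, valid C c -> [/\ valid C (f k c), ext (f k c) c & Pk C n A0 A1 R k (f k c)].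
  move=> k c; exact: (proj2_sig (constructive_indefinite_description _ (Hst k c))).
pose cs := fix cs k := if k is k'.+1 then f k' (cs k') else c0.
have Hv : forall k, valid C (cs k).
  elim=> [|k IH] /=; first exact: valid_c0.
  by case: (Hf k _ IH).
have Hnext : forall k, ext (cs k.+1) (cs k) /\ Pk C n A0 A1 R k (cs k.+1).
  move=> k; by case: (Hf k _ (Hv k)).
have Hext : forall k j, k <= j -> ext (cs j) (cs k).
  move=> k j; elim: j => [|j IH].
  - rewrite leqn0 => /eqP ->; exact: ext_refl.
  - rewrite leq_eqVlt => /orP [/eqP ->|Hlt]; first exact: ext_refl.
    exact: ext_trans (proj1 (Hnext j)) (IH Hlt).
have Hca : forall k, k <= ca (cs k.+1).
  move=> k; case: (Hnext k) => _ [_ [x [Hkx Hxa _]] _]; exact: leq_trans Hkx Hxa.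
pose G x := bitn (ch (cs x.+1)) x.
have Hsat : forall k, sat (cs k) G.
  move=> k x; split.
  - move=> Hx; rewrite /G.
    case: (leqP x.+1 k) => Hk.
    + by case: (Hext _ _ Hk) => _ H _ _; rewrite H // Hca.
    + by case: (Hext k x.+1 (ltnW Hk)) => _ H _ _; rewrite H.
  - move=> Hx Gx.
    have Hk : k <= x.+1.
      case: k Hx => [|k] // Hx; apply: leq_trans (Hca k) _; exact: ltnW.
    case: (Hext k x.+1 Hk) => _ _ H _; apply: H => //; exact: Hca.
exists G; split.
- split.
  + move=> k; case: (Hnext k) => _ [_ [x [Hkx Hxa Hb]] _].
    exists x; split => //; by rewrite (proj1 (Hsat k.+1 x) Hxa).
  + move=> i; case: (Hnext i) => _ [[HA|HA] _ _]; [left|right];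
      exists (ca (cs i.+1)).+1 => x Hx Gx; apply: HA; exact: (proj2 (Hsat i.+1 x) Hx Gx).
- move=> m phi M [p Hp] Hd He.
  pose k := pickle ((m, enc p, Lof M) : RT).
  case: (Hnext k) => _ [_ _ HC].
  move: HC; rewrite /k pickleK decK Mof_Lof => HC.
  have Hphi : forall x, phiG C G p x <-> phi x by move=> x; rewrite Hp.
  case: (HC G (Hsat k.+1) Hd).
  + move=> s; case: (He s) => V [H1 [H2 H3]]; exists V; split => //; split => //.
    by apply/Hphi.
  + move=> V [H1 H2 H3]; exists V; split => //; split => //; by apply/Hphi.
Qed.
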